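(* Let $(H,+,\circ)$ be a commutative multiplicative hyperring with identity, let $m\geq 1$, and let $P$ be a proper hyperideal of $H$. If $M_m(P)$ is an sdf-absorbing hyperideal of $M_m(H)$, then $P$ is an sdf-absorbing hyperideal of $H$.
   Context: A commutative multiplicative hyperring $(H,+,\circ)$ consists of an abelian group $(H,+)$ and an associative, commutative hyperoperation $\circ: H\times H\to P^*(H)$ with $x\circ(y+z)\subseteq x\circ y+x\circ z$ and $x\circ(-y)=-(x\circ y)=(-x)\circ y$. For subsets $A,B$, $A\circ B=\bigcup_{a\in A,b\in B}a\circ b$, $A\pm B=\{a\pm b\}$; $x^2=x\circ x$. Identity: $x\in x\circ 1$. A hyperideal is a nonempty $P$ with $x-y\in P$ and $r\circ x\subseteq P$ for $x,y\in P$, $r\in H$. $M_m(H)$ is the multiplicative hyperring of $m\times m$ matrices over $H$ with entrywise addition and hyperproduct $A\circ B=\{C: c_{ij}\in\sum_{k=1}^m a_{ik}\circ b_{kj}\}$; sets of matrices are compared entrywise. $M_m(P)$ is the set of matrices with all entries in $P$. A proper hyperideal $P$ (of $H$, or analogously of $M_m(H)$) is sdf-absorbing if whenever $x,y$ are nonzero elements and $x^2-y^2\subseteq P$, then $x-y\in P$ or $x+y\in P$. *)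

(* Defs.v *)
From mathcomp Require Import all_boot all_order all_algebra.
Set Implicit Arguments. Unset Strict Implicit. Unset Printing Implicit Defensive.
Import GRing.Theory.
Local Open Scope ring_scope.

Definition hset (T : Type) := T -> Prop.
Definition hsubset (T : Type) (A B : hset T) := forall x, A x -> B x.
Definition hseteq (T : Type) (A B : hset T) := forall x, A x <-> B x.
Definition hset1 (T : Type) (a : T) : hset T := fun x => x = a.

Definition hyperop (T : Type) := T -> T -> hset T.

Section HyperDefs.
Variable T : zmodType.
Variable hm : hyperop T.

Definition hsetmul (A B : hset T) : hset T :=
  fun z => exists a b, A a /\ B b /\ hm a b z.
Definition hsetadd (A B : hset T) : hset T :=
  fun z => exists a b, A a /\ B b /\ z = a + b.
Definition hsetsub (A B : hset T) : hset T :=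
  fun z => exists a b, A a /\ B b /\ z = a - b.
Definition hsetopp (A : hset T) : hset T := fun z => A (- z).

Definition comm_mult_hyperring : Prop :=
  [/\ (forall x y, exists z, hm x y z),
      (forall x y z, hseteq (hsetmul (hm x y) (hset1 z)) (hsetmul (hset1 x) (hm y z))),
      (forall x y, hseteq (hm x y) (hm y x)),
      (forall x y z, hsubset (hm x (y + z)) (hsetadd (hm x y) (hm x z))) &
      (forall x y, hseteq (hm x (- y)) (hsetopp (hm x y))
                   /\ hseteq (hm (- x) y) (hsetopp (hm x y)))].

Definition has_identity : Prop := exists one : T, forall x, hm x one x.

Definition hyperideal (P : hset T) : Prop :=
  [/\ (exists x, P x),
      (forall x y, P x -> P y -> P (x - y)) &
      (forall r x, P x -> hsubset (hm r x) P)].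

Definition hproper (P : hset T) : Prop := exists x, ~ P x.

Definition sdf_absorbing (P : hset T) : Prop :=
  [/\ hyperideal P, hproper P &
      forall x y, x <> 0 -> y <> 0 ->
        hsubset (hsetsub (hm x x) (hm y y)) P -> P (x - y) \/ P (x + y)].

End HyperDefs.

(* Matrix hyperproduct on M_m(H):
   A o B = { C : c_ij \in \sum_k a_ik o b_kj },
   where a finite sum of sets is { \sum_k s_k : s_k \in S_k }. *)
Definition hbigsum (T : zmodType) (m : nat) (S : 'I_m -> hset T) : hset T :=
  fun z => exists f : 'I_m -> T, (forall k, S k (f k)) /\ z = \sum_(k < m) f k.

Definition mx_hmul (T : zmodType) (hm : hyperop T) (m : nat) : hyperop 'M[T]_m :=
  fun A B C => forall i j, hbigsum (fun k => hm (A i k) (B k j)) (C i j).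

Definition Mset (T : Type) (m : nat) (P : hset T) : hset 'M[T]_m :=
  fun A => forall i j, P (A i j).

(* Main.v *)
Require Import Defs.
From mathcomp Require Import all_boot all_order all_algebra.
Import GRing.Theory.
Local Open Scope ring_scope.

Lemma sumP_aux (H : zmodType) (hm : hyperop H) (P : hset H) (n : nat) (F : 'I_n -> H) :
  hyperideal hm P -> (forall k, P (F k)) -> P (\sum_(k < n) F k).
Proof.
rewrite /hyperideal => -[[a Pa] Hsub _] HF.
have P0 : P 0 by rewrite -(subrr a); apply: Hsub.
apply: (big_ind P) => //.
move=> u v Pu Pv; have -> : u + v = u - (0 - v) by rewrite sub0r opprK.
by apply: (Hsub) => //; apply: Hsub.
Qed.

Theorem mainTheorem12 (H : zmodType) (hm : hyperop H) (m : nat) (P : hset H) :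
  comm_mult_hyperring hm -> has_identity hm -> (0 < m)%N ->
  hyperideal hm P -> hproper P ->
  sdf_absorbing (@mx_hmul H hm m) (@Mset H m P) ->
  sdf_absorbing hm P.
Proof.
move=> _ _ m0 HP Hpr [_ _ Habs]; split => // x y x0 y0 Hsub.
case: m m0 Habs => // n _ Habs.
have := Habs (const_mx x) (const_mx y).
case.
- by move/matrixP/(_ ord0 ord0); rewrite !mxE.
- by move/matrixP/(_ ord0 ord0); rewrite !mxE.
- move=> Z [C [D [HC [HD ->]]]] i j; rewrite !mxE.
  case: (HC i j) => f [Hf ->]; case: (HD i j) => g [Hg ->].
  rewrite -sumrB; apply: sumP_aux HP _ => k.
  apply: Hsub; exists (f k), (g k); split; last split => //.
  + by have := Hf k; rewrite !mxE.
  + by have := Hg k; rewrite !mxE.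
- by move=> Hm; left; have := Hm ord0 ord0; rewrite !mxE.
- by move=> Hm; right; have := Hm ord0 ord0; rewrite !mxE.
Qed.
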